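(* Let $r>0$ and $\overline T>0$. For $\mathbf h,\mathbf g\in\mathbb R^3$ set $\mathbf v=\mathbf h+\frac{r}{1+r}\mathbf g$ and $\mathbf w=\sqrt r\,\mathbf h-\frac{\sqrt r}{1+r}\mathbf g$. Then for all multi-indices $\lambda=(l_1,l_2,l_3),\kappa=(k_1,k_2,k_3)\in\mathbb N^3$, $$H^{\mathbf 0,\overline T}_\lambda(\mathbf v)H^{\mathbf 0,\overline T}_\kappa(\mathbf w)=\sum_{\kappa'+\lambda'=\kappa+\lambda}c^{l_1k_1}_{l'_1k'_1}(r)\,c^{l_2k_2}_{l'_2k'_2}(r)\,c^{l_3k_3}_{l'_3k'_3}(r)\,H^{\mathbf 0,\overline T}_{\lambda'}\big(\sqrt{1+r}\,\mathbf h\big)H^{\mathbf 0,\overline T}_{\kappa'}\Big(\sqrt{\tfrac{r}{1+r}}\,\mathbf g\Big),$$ where the sum runs over $\kappa'=(k'_1,k'_2,k'_3),\lambda'=(l'_1,l'_2,l'_3)\in\mathbb N^3$ with $\kappa'+\lambda'=\kappa+\lambda$, and $$c^{l_dk_d}_{l'_dk'_d}(r)=(1+r)^{-\frac{l'_d+k'_d}{2}}\sum_{s\in\mathbb Z}C_{l_d}^{s}C_{k_d}^{l'_d-s}(-1)^{k_d-l'_d+s}r^{\frac{l_d+l'_d}{2}-s}.$$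
   Context: For $\mathbf u\in\mathbb R^3$, $T>0$, $\mathcal M_{\mathbf u,T}(\mathbf v)=(2\pi T)^{-3/2}\exp\!\big(-|\mathbf v-\mathbf u|^2/(2T)\big)$, and for $\alpha\in\mathbb N^3$ with $|\alpha|=\alpha_1+\alpha_2+\alpha_3$, the Hermite polynomial is $H^{\mathbf u,T}_\alpha(\mathbf v)=\frac{(-1)^{|\alpha|}T^{|\alpha|/2}}{\mathcal M_{\mathbf u,T}(\mathbf v)}\frac{\partial^{|\alpha|}}{\partial v_1^{\alpha_1}\partial v_2^{\alpha_2}\partial v_3^{\alpha_3}}\mathcal M_{\mathbf u,T}(\mathbf v)$. $C_n^k$ is the binomial coefficient, taken to be $0$ when $k<0$ or $k>n$. *)

(* Defs.v *)
From Stdlib Require Import Reals ZArith Lra Bool.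
From Coquelicot Require Import Coquelicot.
Open Scope R_scope.

Definition vec3 : Type := (R * R * R)%type.
Definition midx : Type := (nat * nat * nat)%type.

Definition v1 (v : vec3) : R := fst (fst v).
Definition v2 (v : vec3) : R := snd (fst v).
Definition v3 (v : vec3) : R := snd v.

Definition mk3 (a b c : R) : vec3 := (a, b, c).
Definition vadd (a b : vec3) : vec3 := mk3 (v1 a + v1 b) (v2 a + v2 b) (v3 a + v3 b).
Definition vscal (c : R) (a : vec3) : vec3 := mk3 (c * v1 a) (c * v2 a) (c * v3 a).
Definition vnorm2 (a : vec3) : R := v1 a ^ 2 + v2 a ^ 2 + v3 a ^ 2.

Definition a1 (a : midx) : nat := fst (fst a).
Definition a2 (a : midx) : nat := snd (fst a).
Definition a3 (a : midx) : nat := snd a.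
Definition mabs (a : midx) : nat := (a1 a + a2 a + a3 a)%nat.

Definition Maxw (u : vec3) (T : R) (v : vec3) : R :=
  Rpower (2 * PI * T) (- (3 / 2)) *
  exp (- vnorm2 (vadd v (vscal (-1) u)) / (2 * T)).

Definition dpart (f : vec3 -> R) (a : midx) (v : vec3) : R :=
  Derive_n (fun x1 =>
    Derive_n (fun x2 =>
      Derive_n (fun x3 => f (mk3 x1 x2 x3)) (a3 a) (v3 v))
    (a2 a) (v2 v))
  (a1 a) (v1 v).

Definition Hermite (u : vec3) (T : R) (a : midx) (v : vec3) : R :=
  (-1) ^ (mabs a) * Rpower T (INR (mabs a) / 2) / Maxw u T v *
  dpart (Maxw u T) a v.

Definition binomZ (n : nat) (k : Z) : R :=
  if andb (0 <=? k)%Z (k <=? Z.of_nat n)%Z then Binomial.C n (Z.to_nat k) else 0.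

Definition c_term (r : R) (l k l' : nat) (s : Z) : R :=
  binomZ l s * binomZ k (Z.of_nat l' - s) *
  powerRZ (-1) (Z.of_nat k - Z.of_nat l' + s) *
  Rpower r ((INR l + INR l') / 2 - IZR s).

(* c^{l k}_{l' k'}(r); the sum over s in Z is restricted to 0 <= s <= l,
   outside of which C_l^s = 0 *)
Definition ccoef (r : R) (l k l' k' : nat) : R :=
  Rpower (1 + r) (- ((INR l' + INR k') / 2)) *
  sum_f_R0 (fun s => c_term r l k l' (Z.of_nat s)) l.

Definition zero3 : vec3 := mk3 0 0 0.

(* Main.v *)
Require Import Defs.
From Stdlib Require Import Reals ZArith.
From Coquelicot Require Import Coquelicot.
From Stdlib Require Import Lra Lia FunctionalExtensionality Bool.
Open Scope R_scope.


Fixpoint He (n : nat) (x : R) : R :=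
  match n with
  | O => 1
  | S n' => match n' with
            | O => x
            | S n'' => x * He n' x - INR n' * He n'' x
            end
  end.

Lemma He_rec n x : He (S n) x = x * He n x - INR n * He (pred n) x.
Proof. destruct n; simpl; [ring | reflexivity]. Qed.

Lemma sum_mult_l a f n : sum_f_R0 (fun i => a * f i) n = a * sum_f_R0 f n.
Proof. induction n; simpl; [ring | rewrite IHn; ring]. Qed.

Lemma sum_zero f n : (forall i, (i <= n)%nat -> f i = 0) -> sum_f_R0 f n = 0.
Proof. intros H. induction n; simpl. apply H; lia. rewrite IHn, H; [ring|lia|]. intros; apply H; lia. Qed.

Definition shift (f : nat -> R) (m : nat) : R :=
  match m with O => 0 | S m' => f m' end.
Definition Sop (al be : R) (f : nat -> R) (m : nat) : R := al * shift f m + be * f m.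
Definition delta (m : nat) : R := match m with O => 1 | _ => 0 end.
Definition Nop (al be : R) (D : nat) (f : nat -> R) (m : nat) : R :=
  al * INR (S m) * f (S m) + be * (INR D - INR m) * f m.

Lemma comm al be al' be' D f m :
  Nop al be (S D) (Sop al' be' f) m = Sop al' be' (Nop al be D f) m + (al*al'+be*be') * f m.
Proof.
  unfold Nop, Sop, shift. destruct m; rewrite !S_INR; simpl; try rewrite S_INR; ring.
Qed.

Definition E (d : nat) (y : nat -> R) (a b : R) : R :=
  sum_f_R0 (fun m => y m * (He m a * He (d - m) b)) d.

Lemma E_ext d y z a b : (forall m, (m <= d)%nat -> y m = z m) -> E d y a b = E d z a b.
Proof. intros H; unfold E; apply sum_eq; intros; rewrite H; auto. Qed.

Lemma E_lin d f g al be a b :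
  E d (fun m => al * f m + be * g m) a b = al * E d f a b + be * E d g a b.
Proof.
  unfold E. rewrite <- !sum_mult_l, <- plus_sum. apply sum_eq; intros; ring.
Qed.

Lemma mulHe m x : x * He m x = He (S m) x + INR m * He (pred m) x.
Proof. rewrite He_rec; ring. Qed.

Lemma LemA d y a b :
  a * E (S d) y a b = E (S (S d)) (shift y) a b + E d (fun m => INR (S m) * y (S m)) a b.
Proof.
  unfold E. rewrite <- sum_mult_l.
  transitivity (sum_f_R0 (fun m => y m * He (S m) a * He (S d - m) b) (S d)
    + sum_f_R0 (fun m => INR m * y m * He (pred m) a * He (S d - m) b) (S d)).
  { rewrite <- plus_sum. apply sum_eq; intros.
    replace (a * (y i * (He i a * He (S d - i) b))) with (y i * (a * He i a) * He (S d - i) b) by ring.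
    rewrite mulHe. ring. }
  f_equal.
  - rewrite (decomp_sum _ (S (S d))) by lia. simpl pred. simpl shift. rewrite Rmult_0_l, Rplus_0_l.
    apply sum_eq; intros. simpl Nat.sub. ring.
  - rewrite (decomp_sum _ (S d)) by lia. simpl pred. simpl INR at 1. rewrite !Rmult_0_l, Rplus_0_l.
    apply sum_eq; intros. simpl pred. simpl Nat.sub. ring.
Qed.

Lemma LemB d y a b : y (S (S d)) = 0 ->
  b * E (S d) y a b = E (S (S d)) y a b + E d (fun m => (INR (S d) - INR m) * y m) a b.
Proof.
  intros Hy. unfold E. rewrite <- sum_mult_l.
  transitivity (sum_f_R0 (fun m => y m * He m a * He (S (S d - m)) b) (S d)
    + sum_f_R0 (fun m => INR (S d - m) * y m * He m a * He (pred (S d - m)) b) (S d)).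
  { rewrite <- plus_sum. apply sum_eq; intros.
    replace (b * (y i * (He i a * He (S d - i) b))) with (y i * He i a * (b * He (S d - i) b)) by ring.
    rewrite mulHe. ring. }
  f_equal.
  - symmetry. rewrite tech5. rewrite Hy, Rmult_0_l, Rplus_0_r. apply sum_eq; intros.
    replace (S (S d) - i)%nat with (S (S d - i)) by lia. ring.
  - rewrite tech5. rewrite Nat.sub_diag. simpl INR at 2. rewrite !Rmult_0_l, Rplus_0_r.
    apply sum_eq; intros. rewrite minus_INR by lia.
    replace (pred (S d - i)) with (d - i)%nat by lia. ring.
Qed.

Lemma Emul al be d y a b : y (S (S d)) = 0 ->
  (al * a + be * b) * E (S d) y a b = E (S (S d)) (Sop al be y) a b + E d (Nop al be (S d) y) a b.
Proof.
  intros Hy. rewrite Rmult_plus_distr_r, !Rmult_assoc, LemA, LemB by exact Hy.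
  unfold Sop. rewrite E_lin.
  rewrite (E_ext d (Nop al be (S d) y) (fun m => al * (INR (S m) * y (S m)) + be * ((INR (S d) - INR m) * y m)))
    by (intros; unfold Nop; ring).
  rewrite E_lin. ring.
Qed.

Section Ladder.
Variables c s : R.
Hypothesis Hcs : c * c + s * s = 1.

Definition yv (l k : nat) : nat -> R := Nat.iter l (Sop c s) (Nat.iter k (Sop s (-c)) delta).

Lemma Sop_supp al be f n : (forall m, (n < m)%nat -> f m = 0) ->
  forall m, (S n < m)%nat -> Sop al be f m = 0.
Proof. intros H m Hm. unfold Sop, shift. destruct m; [lia|]. rewrite !H by lia. ring. Qed.

Lemma yv_supp l k m : (l + k < m)%nat -> yv l k m = 0.
Proof.
  revert m. induction l; intros m Hm; simpl.
  - revert m Hm. induction k; intros m Hm; simpl.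
    + destruct m; [lia|reflexivity].
    + apply (Sop_supp _ _ _ k); auto.
  - apply (Sop_supp _ _ _ (l + k)); auto.
Qed.

Lemma Sop_zero al be f m : (forall m, f m = 0) -> Sop al be f m = 0.
Proof. intros H. unfold Sop, shift. destruct m; rewrite ?H; ring. Qed.

Lemma Nv0 k m : Nop c s k (yv 0 k) m = 0.
Proof.
  revert m. induction k; intros m.
  - unfold Nop, yv; simpl. destruct m; simpl; ring.
  - unfold yv; simpl. rewrite comm. rewrite Sop_zero by exact IHk. ring.
Qed.

Lemma Sop_ext al be f g m : (forall m, f m = g m) -> Sop al be f m = Sop al be g m.
Proof. intros H. unfold Sop, shift. destruct m; rewrite ?H; ring. Qed.

Lemma Sop_scal al be x f m : Sop al be (fun m => x * f m) m = x * Sop al be f m.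
Proof. unfold Sop, shift. destruct m; ring. Qed.

Lemma Nv l k m : Nop c s (l + k) (yv l k) m = INR l * yv (pred l) k m.
Proof.
  revert m. induction l; intros m.
  - simpl. rewrite Nv0. ring.
  - change (yv (S l) k) with (Sop c s (yv l k)). change (S l + k)%nat with (S (l + k)).
    rewrite comm, Hcs, (Sop_ext _ _ _ _ _ IHl), Sop_scal.
    destruct l.
    + simpl pred. simpl INR. ring.
    + simpl pred. change (Sop c s (yv l k)) with (yv (S l) k). rewrite (S_INR (S l)). ring.
Qed.

Lemma Nw k m : Nop s (-c) k (yv 0 k) m = INR k * yv 0 (pred k) m.
Proof.
  revert m. induction k; intros m.
  - unfold Nop, yv; simpl. destruct m; simpl; ring.
  - change (yv 0 (S k)) with (Sop s (-c) (yv 0 k)).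
    rewrite comm. replace (s * s + - c * - c) with 1 by lra.
    rewrite (Sop_ext _ _ _ _ _ IHk), Sop_scal.
    destruct k.
    + simpl pred. simpl INR. ring.
    + simpl pred. change (Sop s (-c) (yv 0 k)) with (yv 0 (S k)). rewrite (S_INR (S k)). ring.
Qed.

Lemma E_scal d y al a b : E d (fun m => al * y m) a b = al * E d y a b.
Proof. unfold E. rewrite <- sum_mult_l. apply sum_eq; intros; ring. Qed.

Lemma E_zero d a b : E d (fun _ => 0) a b = 0.
Proof. unfold E. apply sum_zero; intros; ring. Qed.

Lemma mainQ a b : forall k, He k (s * a + - c * b) = E k (yv 0 k) a b.
Proof.
  assert (H : forall k, He k (s * a + - c * b) = E k (yv 0 k) a b /\
                        He (S k) (s * a + - c * b) = E (S k) (yv 0 (S k)) a b).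
  { induction k.
    - split; unfold E, yv; simpl; unfold Sop, shift, delta; simpl; ring.
    - destruct IHk as [IH1 IH2]. split; [exact IH2|].
      rewrite He_rec, IH2. simpl pred. rewrite IH1.
      rewrite Emul by (apply yv_supp; lia).
      rewrite (E_ext k _ (fun m => INR (S k) * yv 0 k m)) by (intros; apply Nw).
      rewrite E_scal. unfold yv; simpl. ring. }
  intros k; apply H.
Qed.

Lemma main1 a b : forall l k,
  He l (c * a + s * b) * He k (s * a + - c * b) = E (l + k) (yv l k) a b.
Proof.
  assert (H : forall l k, He l (c * a + s * b) * He k (s * a + - c * b) = E (l + k) (yv l k) a b /\
     He (S l) (c * a + s * b) * He k (s * a + - c * b) = E (S l + k) (yv (S l) k) a b).
  { induction l; intros k.
    - split.
      + simpl. rewrite Rmult_1_l. apply mainQ.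
      + rewrite mainQ. simpl He. destruct k.
        * unfold E, yv; simpl; unfold Sop, shift, delta; simpl; ring.
        * rewrite Emul by (apply yv_supp; lia).
          rewrite (E_ext k _ (fun m => 0)).
          2:{ intros. rewrite (Nv 0 (S k)). simpl; ring. }
          rewrite E_zero. unfold yv; simpl. ring.
    - destruct (IHl k) as [IH1 IH2]. split; [exact IH2|].
      rewrite He_rec. simpl pred.
      replace (((c * a + s * b) * He (S l) (c * a + s * b) - INR (S l) * He l (c * a + s * b)) * He k (s * a + - c * b))
        with ((c * a + s * b) * (He (S l) (c * a + s * b) * He k (s * a + - c * b)) - INR (S l) * (He l (c * a + s * b) * He k (s * a + - c * b))) by ring.
      rewrite IH1, IH2. change (S l + k)%nat with (S (l + k)).
      rewrite Emul by (apply yv_supp; lia).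
      rewrite (E_ext (l + k) _ (fun m => INR (S l) * yv l k m)) by (intros; apply (Nv (S l) k)).
      rewrite E_scal.
      change (S (S l) + k)%nat with (S (S (l+k))). change (yv (S (S l)) k) with (Sop c s (yv (S l) k)). ring. }
  intros; apply H.
Qed.
End Ladder.

Fixpoint bin (n k : nat) : R :=
  match n, k with
  | O, O => 1
  | O, S _ => 0
  | S n', O => 1
  | S n', S k' => bin n' k' + bin n' (S k')
  end.

Lemma bin_gt n k : (n < k)%nat -> bin n k = 0.
Proof.
  revert k; induction n; intros k Hk; destruct k; simpl; try lia; auto.
  rewrite !IHn by lia. ring.
Qed.

Lemma C_n_0' n : Binomial.C n 0 = 1.
Proof. unfold Binomial.C. rewrite Nat.sub_0_r. simpl. field. apply INR_fact_neq_0. Qed.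
Lemma C_n_n' n : Binomial.C n n = 1.
Proof. unfold Binomial.C. rewrite Nat.sub_diag. simpl. field. apply INR_fact_neq_0. Qed.

Lemma bin_C n k : (k <= n)%nat -> bin n k = Binomial.C n k.
Proof.
  revert k; induction n; intros k Hk.
  - destruct k; [|lia]. simpl. rewrite C_n_0'. reflexivity.
  - destruct k; simpl. rewrite C_n_0'; reflexivity.
    destruct (Nat.eq_dec k n).
    + rewrite e. rewrite (bin_gt n (S n)) by lia. rewrite IHn by lia. rewrite !C_n_n'. ring.
    + rewrite !IHn by lia. apply pascal. lia.
Qed.

Section Binop.
Variables al be : R.
Definition B (n : nat) (u : nat -> R) : R :=
  sum_f_R0 (fun i => bin n i * al ^ i * be ^ (n - i) * u i) n.

Lemma B_succ n u : B (S n) u = al * B n (fun i => u (S i)) + be * B n u.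
Proof.
  unfold B. rewrite (decomp_sum _ (S n)) by lia. simpl pred.
  transitivity (bin (S n) 0 * al ^ 0 * be ^ (S n - 0) * u 0%nat
     + al * sum_f_R0 (fun i => bin n i * al ^ i * be ^ (n - i) * u (S i)) n
     + sum_f_R0 (fun i => bin n (S i) * al ^ (S i) * be ^ (n - i) * u (S i)) n).
  { rewrite <- sum_mult_l. rewrite Rplus_assoc, <- plus_sum. f_equal. apply sum_eq; intros.
    simpl bin. simpl Nat.sub. simpl pow. ring. }
  set (G := fun j => bin n j * al ^ j * be ^ (S n - j) * u j).
  assert (H1 : sum_f_R0 G (S n) = G 0%nat + sum_f_R0 (fun i => G (S i)) n).
  { rewrite (decomp_sum _ (S n)) by lia. reflexivity. }
  assert (H2 : sum_f_R0 G (S n) = be * sum_f_R0 (fun i => bin n i * al ^ i * be ^ (n - i) * u i) n).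
  { rewrite tech5. unfold G at 2. rewrite bin_gt by lia. rewrite Rmult_0_l, !Rmult_0_l, Rplus_0_r.
    rewrite <- sum_mult_l. apply sum_eq; intros. unfold G. replace (S n - i)%nat with (S (n - i)) by lia.
    simpl pow. ring. }
  rewrite <- H2, H1. unfold G. simpl Nat.sub. simpl bin. destruct n; simpl; ring.
Qed.

Definition shn (i : nat) (z : nat -> R) (m : nat) : R :=
  if Nat.leb i m then z (m - i)%nat else 0.

Lemma binop n z m : Nat.iter n (Sop al be) z m = B n (fun i => shn i z m).
Proof.
  revert m. induction n; intros m.
  - unfold B, shn. simpl. rewrite Nat.sub_0_r. ring.
  - simpl Nat.iter. unfold Sop at 1. rewrite B_succ, IHn. f_equal. f_equal.
    unfold shift. destruct m.
    + unfold B. rewrite sum_zero; auto. intros. unfold shn. simpl. ring.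
    + rewrite IHn. reflexivity.
Qed.
End Binop.

Lemma shn_delta t j : shn t delta j = if Nat.eqb t j then 1 else 0.
Proof.
  unfold shn. destruct (Nat.leb_spec t j); destruct (Nat.eqb_spec t j); subst.
  - rewrite Nat.sub_diag. reflexivity.
  - destruct (j - t)%nat eqn:E; [lia|reflexivity].
  - lia.
  - reflexivity.
Qed.

Lemma sum_delta (F : nat -> R) k j :
  sum_f_R0 (fun t => F t * shn t delta j) k = if Nat.leb j k then F j else 0.
Proof.
  induction k; simpl.
  - rewrite shn_delta. destruct j; simpl; ring.
  - rewrite IHk, shn_delta. destruct (Nat.leb_spec j k); destruct (Nat.eqb_spec (S k) j);
      destruct (Nat.leb_spec j (S k)); subst; try lia; try ring.
Qed.

Lemma yv_formula c s l k m :
  yv c s l k m = sum_f_R0 (fun i => bin l i * c ^ i * s ^ (l - i) *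
     (if Nat.leb i m then (if Nat.leb (m - i) k then bin k (m - i) * s ^ (m - i) * (-c) ^ (k - (m - i)) else 0) else 0)) l.
Proof.
  unfold yv. rewrite binop. unfold B. apply sum_eq; intros i Hi. f_equal.
  unfold shn. destruct (Nat.leb i m); [|reflexivity].
  rewrite binop. unfold B. rewrite sum_delta. reflexivity.
Qed.

Lemma binomZ_nat n j : binomZ n (Z.of_nat j) = if Nat.leb j n then bin n j else 0.
Proof.
  unfold binomZ. destruct (Nat.leb_spec j n).
  - replace ((0 <=? Z.of_nat j)%Z && (Z.of_nat j <=? Z.of_nat n)%Z)%bool with true.
    + rewrite Nat2Z.id. symmetry; apply bin_C; auto.
    + symmetry. apply andb_true_intro; split; apply Z.leb_le; lia.
  - replace ((0 <=? Z.of_nat j)%Z && (Z.of_nat j <=? Z.of_nat n)%Z)%bool with false; auto.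
    symmetry. replace (Z.of_nat j <=? Z.of_nat n)%Z with false by (symmetry; apply Z.leb_gt; lia). apply andb_false_r.
Qed.

Lemma binomZ_neg n z : (z < 0)%Z -> binomZ n z = 0.
Proof.
  intros H. unfold binomZ. replace (0 <=? z)%Z with false; auto. symmetry; apply Z.leb_gt; lia.
Qed.

Lemma pow_sqrt_R x n : 0 < x -> sqrt x ^ n = Rpower x (INR n / 2).
Proof.
  intros Hx. rewrite <- Rpower_sqrt by auto. rewrite <- Rpower_pow.
  - rewrite Rpower_mult. f_equal. field.
  - apply exp_pos.
Qed.

Lemma powinv_sqrt_R x n : 0 < x -> (/ sqrt x) ^ n = Rpower x (- (INR n / 2)).
Proof. intros Hx. rewrite pow_inv, pow_sqrt_R, Rpower_Ropp; auto. Qed.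

Lemma coef_match r l k m : 0 < r -> (m <= l + k)%nat ->
  ccoef r l k m (l + k - m) = yv (/ sqrt (1 + r)) (sqrt r / sqrt (1 + r)) l k m.
Proof.
  intros hr Hm. unfold ccoef. rewrite yv_formula. rewrite <- sum_mult_l.
  apply sum_eq; intros i Hi. unfold c_term.
  rewrite binomZ_nat. replace (Nat.leb i l) with true by (symmetry; apply Nat.leb_le; auto).
  destruct (Nat.leb_spec i m).
  2:{ rewrite binomZ_neg by lia. ring. }
  replace (Z.of_nat m - Z.of_nat i)%Z with (Z.of_nat (m - i)) by lia.
  rewrite binomZ_nat. destruct (Nat.leb_spec (m - i) k).
  2:{ ring. }
  replace (Z.of_nat k - Z.of_nat m + Z.of_nat i)%Z with (Z.of_nat (k - (m - i))) by lia.
  rewrite <- pow_powerRZ, <- INR_IZR_INZ.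
  replace (- (/ sqrt (1 + r))) with (-1 * / sqrt (1 + r)) by ring.
  change (sqrt r / sqrt (1 + r)) with (sqrt r * / sqrt (1 + r)). rewrite !Rpow_mult_distr.
  assert (h1 : 0 < 1 + r) by lra.
  rewrite !pow_sqrt_R, !powinv_sqrt_R by auto.
  assert (Hr1 : Rpower r (INR (l - i) / 2) * Rpower r (INR (m - i) / 2) = Rpower r ((INR l + INR m) / 2 - INR i)).
  { rewrite <- Rpower_plus; f_equal; rewrite !minus_INR by lia; field. }
  assert (Hq : Rpower (1 + r) (- (INR i / 2)) * Rpower (1 + r) (- (INR (l - i) / 2)) *
               Rpower (1 + r) (- (INR (m - i) / 2)) * Rpower (1 + r) (- (INR (k - (m - i)) / 2))
             = Rpower (1 + r) (- ((INR m + INR (l + k - m)) / 2))).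
  { rewrite <- !Rpower_plus; f_equal. rewrite !minus_INR by lia. rewrite plus_INR. field. }
  rewrite <- Hr1, <- Hq. ring.
Qed.

Lemma isd_eq (f : R -> R) x l l' : is_derive f x l -> l = l' -> is_derive f x l'.
Proof. intros H <-; exact H. Qed.

Lemma He_der n x : is_derive (He n) x (INR n * He (pred n) x).
Proof.
  revert x.
  assert (H : forall x, is_derive (He n) x (INR n * He (pred n) x) /\
                        is_derive (He (S n)) x (INR (S n) * He n x)).
  2:{ intros x; apply H. }
  induction n; intros x.
  - split.
    + simpl. apply (is_derive_ext (fun _ => 1)); [reflexivity|].
      eapply isd_eq. auto_derive; auto. simpl; ring.
    + simpl. apply (is_derive_ext (fun t => t)); [reflexivity|].
      eapply isd_eq. auto_derive; auto. simpl; ring.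
  - split; [apply IHn|].
    apply (is_derive_ext (fun t => t * He (S n) t - INR (S n) * He n t)); [reflexivity|].
    destruct (IHn x) as [D1 D2].
    eapply isd_eq.
    + apply (@is_derive_minus R_AbsRing).
      * apply (@is_derive_mult R_AbsRing). apply (@is_derive_id R_AbsRing). exact D2.
        intros; apply Rmult_comm.
      * apply is_derive_scal. exact D1.
    + rewrite He_rec. simpl pred. unfold minus, plus, mult, opp, one; simpl. destruct n; simpl; ring.
Qed.

Definition gg (T x : R) : R := exp (- (x ^ 2) / (2 * T)).

Lemma Dg T n x : 0 < T ->
  Derive_n (gg T) n x = (-1) ^ n * (/ sqrt T) ^ n * He n (x / sqrt T) * gg T x.
Proof.
  intros hT. revert x. induction n; intros x.
  - simpl. ring.
  - simpl Derive_n.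
    rewrite (Derive_ext _ (fun t => ((-1) ^ n * (/ sqrt T) ^ n) * (He n (t / sqrt T) * gg T t)))
      by (intros; rewrite IHn; ring).
    apply is_derive_unique.
    eapply isd_eq.
    + apply is_derive_scal.
      apply (@is_derive_mult R_AbsRing).
      * apply (@is_derive_comp R_AbsRing R_NormedModule (He n) (fun t => t / sqrt T)).
        apply He_der. eapply isd_eq. auto_derive; auto. reflexivity.
      * unfold gg. eapply isd_eq. auto_derive; auto. reflexivity.
      * intros; apply Rmult_comm.
    + rewrite He_rec. unfold scal, mult, plus; simpl. unfold mult; simpl.
      assert (Hg : exp (- (x * (x * 1)) * / (2 * T)) = gg T x) by (unfold gg; f_equal; simpl; unfold Rdiv; ring).
      rewrite Hg.
      assert (hq : 0 < sqrt T) by (apply sqrt_lt_R0; auto).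
      assert (HqT : sqrt T * sqrt T = T) by (apply sqrt_sqrt; lra).
      set (q := sqrt T) in *. set (G := gg T x). 
      rewrite <- HqT. destruct n; simpl pred; field; lra.
Qed.

Lemma Maxw_eq T x1 x2 x3 : 0 < T ->
  Maxw zero3 T (mk3 x1 x2 x3) = Rpower (2 * PI * T) (- (3 / 2)) * (gg T x1 * gg T x2 * gg T x3).
Proof.
  intros hT. unfold Maxw, gg, vnorm2, vadd, vscal, zero3, mk3, v1, v2, v3; simpl.
  rewrite <- !exp_plus. f_equal. f_equal. field. lra.
Qed.

Lemma dpart_eq T a v : 0 < T ->
  dpart (Maxw zero3 T) a v = Rpower (2 * PI * T) (- (3 / 2)) *
    (Derive_n (gg T) (a1 a) (v1 v) * Derive_n (gg T) (a2 a) (v2 v) * Derive_n (gg T) (a3 a) (v3 v)).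
Proof.
  intros hT. set (K0 := Rpower (2 * PI * T) (- (3 / 2))). unfold dpart.
  transitivity (Derive_n (fun x1 => Derive_n (fun x2 =>
      (K0 * gg T x1 * Derive_n (gg T) (a3 a) (v3 v)) * gg T x2) (a2 a) (v2 v)) (a1 a) (v1 v)).
  { apply Derive_n_ext; intro x1. apply Derive_n_ext; intro x2.
    rewrite (Derive_n_ext _ (fun x3 => (K0 * gg T x1 * gg T x2) * gg T x3)).
    - rewrite Derive_n_scal_l. ring.
    - intros t. rewrite Maxw_eq by auto. unfold K0; ring. }
  transitivity (Derive_n (fun x1 => (K0 * Derive_n (gg T) (a3 a) (v3 v) * Derive_n (gg T) (a2 a) (v2 v)) * gg T x1) (a1 a) (v1 v)).
  { apply Derive_n_ext; intro x1.
    rewrite Derive_n_scal_l. ring. }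
  rewrite Derive_n_scal_l. ring.
Qed.

Lemma m1pow2 n : (-1) ^ n * (-1) ^ n = 1.
Proof. rewrite <- Rpow_mult_distr. replace (-1 * -1) with 1 by ring. apply pow1. Qed.

Lemma Hermite_eq T a v : 0 < T ->
  Hermite zero3 T a v = He (a1 a) (v1 v / sqrt T) * He (a2 a) (v2 v / sqrt T) * He (a3 a) (v3 v / sqrt T).
Proof.
  intros hT. unfold Hermite. rewrite dpart_eq by auto. rewrite !Dg by auto.
  destruct v as [[x1 x2] x3]. change ((x1, x2, x3)) with (mk3 x1 x2 x3). rewrite Maxw_eq by auto.
  unfold v1, v2, v3, mk3; simpl.
  assert (hq : 0 < sqrt T) by (apply sqrt_lt_R0; auto).
  assert (HR : Rpower T (INR (mabs a) / 2) = sqrt T ^ (a1 a) * sqrt T ^ (a2 a) * sqrt T ^ (a3 a)).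
  { rewrite <- !pow_add. rewrite <- Rpower_sqrt, <- Rpower_pow by (auto; apply exp_pos).
    rewrite Rpower_mult. f_equal. unfold mabs. rewrite !plus_INR. field. }
  assert (HM : (-1) ^ mabs a = (-1) ^ (a1 a) * (-1) ^ (a2 a) * (-1) ^ (a3 a)).
  { unfold mabs. rewrite !pow_add. ring. }
  rewrite HR, HM. rewrite !pow_inv.
  assert (K0p : 0 < Rpower (2 * PI * T) (- (3 / 2))) by apply exp_pos.
  assert (g1 : 0 < gg T x1) by apply exp_pos.
  assert (g2 : 0 < gg T x2) by apply exp_pos.
  assert (g3 : 0 < gg T x3) by apply exp_pos.
  assert (p1 := m1pow2 (a1 a)). assert (p2 := m1pow2 (a2 a)). assert (p3 := m1pow2 (a3 a)).
  assert (s1 : sqrt T ^ (a1 a) <> 0) by (apply pow_nonzero; lra).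
  assert (s2 : sqrt T ^ (a2 a) <> 0) by (apply pow_nonzero; lra).
  assert (s3 : sqrt T ^ (a3 a) <> 0) by (apply pow_nonzero; lra).
  set (e1 := (-1) ^ (a1 a)) in *. set (e2 := (-1) ^ (a2 a)) in *. set (e3 := (-1) ^ (a3 a)) in *.
  field_simplify; [| repeat split; lra].
  simpl pow. rewrite !Rmult_1_r, p1, p2, p3. ring.
Qed.

Lemma sum_mult_r a f n : sum_f_R0 (fun i => f i * a) n = sum_f_R0 f n * a.
Proof. induction n; simpl; [ring | rewrite IHn; ring]. Qed.

Lemma triple_sum F G H n1 n2 n3 :
  sum_f_R0 (fun i => sum_f_R0 (fun j => sum_f_R0 (fun k => F i * G j * H k) n3) n2) n1
  = sum_f_R0 F n1 * sum_f_R0 G n2 * sum_f_R0 H n3.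
Proof.
  transitivity (sum_f_R0 (fun i => F i * (sum_f_R0 G n2 * sum_f_R0 H n3)) n1).
  - apply sum_eq; intros i _.
    transitivity (sum_f_R0 (fun j => G j * (F i * sum_f_R0 H n3)) n2).
    + apply sum_eq; intros j _. rewrite sum_mult_l. ring.
    + rewrite sum_mult_r. ring.
  - rewrite sum_mult_r. ring.
Qed.

Lemma oneD r T l k x y : 0 < r -> 0 < T ->
  He l ((x + r / (1 + r) * y) / sqrt T) * He k ((sqrt r * x + - (sqrt r / (1 + r)) * y) / sqrt T)
  = sum_f_R0 (fun j => ccoef r l k j (l + k - j) * He j (sqrt (1 + r) * x / sqrt T)
                        * He (l + k - j) (sqrt (r / (1 + r)) * y / sqrt T)) (l + k).
Proof.
  intros hr hT.
  assert (h1 : 0 < 1 + r) by lra.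
  assert (hq : 0 < sqrt (1 + r)) by (apply sqrt_lt_R0; auto).
  assert (hp : 0 < sqrt r) by (apply sqrt_lt_R0; auto).
  assert (ht : 0 < sqrt T) by (apply sqrt_lt_R0; auto).
  assert (Hq : sqrt (1 + r) * sqrt (1 + r) = 1 + r) by (apply sqrt_sqrt; lra).
  assert (Hp : sqrt r * sqrt r = r) by (apply sqrt_sqrt; lra).
  rewrite sqrt_div_alt by auto.
  set (c := / sqrt (1 + r)). set (s := sqrt r / sqrt (1 + r)).
  set (a := sqrt (1 + r) * x / sqrt T). set (b := sqrt r / sqrt (1 + r) * y / sqrt T).
  assert (Hcs : c * c + s * s = 1).
  { unfold c, s. field_simplify; [|lra].
    rewrite !pow2_sqrt by lra. field. lra. }
  assert (Hv : (x + r / (1 + r) * y) / sqrt T = c * a + s * b).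
  { unfold c, s, a, b. rewrite <- Hp at 1. rewrite <- Hq at 1. field. lra. }
  assert (Hw : (sqrt r * x + - (sqrt r / (1 + r)) * y) / sqrt T = s * a + - c * b).
  { unfold c, s, a, b. rewrite <- Hq at 1. field. lra. }
  rewrite Hv, Hw, main1 by exact Hcs. unfold E. apply sum_eq; intros j Hj.
  unfold c, s. rewrite coef_match by auto. fold a b. ring.
Qed.

Theorem lemma1 (r Tb : R) (hr : 0 < r) (hT : 0 < Tb)
  (h g : vec3) (lam kap : midx) :
  let v := vadd h (vscal (r / (1 + r)) g) in
  let w := vadd (vscal (sqrt r) h) (vscal (- (sqrt r / (1 + r))) g) in
  Hermite zero3 Tb lam v * Hermite zero3 Tb kap w =
  sum_f_R0 (fun l1' =>
  sum_f_R0 (fun l2' =>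
  sum_f_R0 (fun l3' =>
    let k1' := (a1 lam + a1 kap - l1')%nat in
    let k2' := (a2 lam + a2 kap - l2')%nat in
    let k3' := (a3 lam + a3 kap - l3')%nat in
    ccoef r (a1 lam) (a1 kap) l1' k1' *
    ccoef r (a2 lam) (a2 kap) l2' k2' *
    ccoef r (a3 lam) (a3 kap) l3' k3' *
    Hermite zero3 Tb (l1', l2', l3') (vscal (sqrt (1 + r)) h) *
    Hermite zero3 Tb (k1', k2', k3') (vscal (sqrt (r / (1 + r))) g))
  (a3 lam + a3 kap)%nat)
  (a2 lam + a2 kap)%nat)
  (a1 lam + a1 kap)%nat.
Proof.
  cbv zeta.
  set (F := fun (l k : nat) (x y : R) (j : nat) =>
    ccoef r l k j (l + k - j) * He j (sqrt (1 + r) * x / sqrt Tb)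
      * He (l + k - j) (sqrt (r / (1 + r)) * y / sqrt Tb)).
  transitivity (sum_f_R0 (fun i => sum_f_R0 (fun j => sum_f_R0 (fun k =>
     F (a1 lam) (a1 kap) (v1 h) (v1 g) i * F (a2 lam) (a2 kap) (v2 h) (v2 g) j
     * F (a3 lam) (a3 kap) (v3 h) (v3 g) k) (a3 lam + a3 kap)) (a2 lam + a2 kap)) (a1 lam + a1 kap)).
  2:{ apply sum_eq; intros i _; apply sum_eq; intros j _; apply sum_eq; intros k _.
      rewrite !Hermite_eq by auto. unfold F, vscal, mk3, v1, v2, v3, a1, a2, a3; simpl. ring. }
  rewrite triple_sum. unfold F.
  rewrite <- !oneD by auto.
  rewrite !Hermite_eq by auto.
  unfold vadd, vscal, mk3, v1, v2, v3; simpl. ring.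
Qed.
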